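(* Consider Setting A (stated in the context), and suppose the sequence of communication graphs $\{\mathcal G[k]\}_{k\ge 0}$ satisfies conditions (C1), (C2) and (C3). Then for every desired rate $\rho\in(0,1)$ there exist observer gains $L_1,\dots,L_N$ (with $L_j$ of compatible dimensions, $L_j$ used by node $j$) such that, when all nodes run Algorithm 1, for every initial state $x[0]$ and all initial estimates there exist constants $c\ge 0$ and $K\in\mathbb N$ with $$\|\hat x_i[k]-x[k]\|\le c\,\rho^k\quad\text{for all }k\ge K\text{ and all }i\in\mathcal V,$$ where $\hat x_i[k]=T\hat z_i[k]$ and $\hat z_i[k]$ stacks $\hat z^{(1)}_i[k],\dots,\hat z^{(N)}_i[k]$.
   Context: Setting A. Consider the discrete-time LTI system $x[k+1]=Ax[k]$, $k\in\mathbb N$, with $A\in\mathbb R^{n\times n}$, monitored by $N$ nodes $\mathcal V=\{1,\dots,N\}$; node $i$ measures $y_i[k]=C_ix[k]$ with $C_i\in\mathbb R^{r_i\times n}$. Let $C=[C_1^T\ \cdots\ C_N^T]^T$ and assume $(A,C)$ is observable. Fix an invertible $T$ such that $\bar A=T^{-1}AT$ is block lower-triangular with diagonal blocks $A_{11},\dots,A_{NN}$ and off-diagonal blocks $A_{jq}$ ($q<j$), zero blocks above the diagonal, and $C_iT=[C_{i1}\ \cdots\ C_{ii}\ 0\ \cdots\ 0]$ for each $i$, with $(A_{jj},C_{jj})$ observable for every $j$ (such $T$ exists). With $z[k]=T^{-1}x[k]$ partitioned compatibly into sub-states $z^{(1)}[k],\dots,z^{(N)}[k]$, one has $z^{(j)}[k+1]=A_{jj}z^{(j)}[k]+\sum_{q=1}^{j-1}A_{jq}z^{(q)}[k]$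 and $y_j[k]=\sum_{q=1}^{j}C_{jq}z^{(q)}[k]$. Node $j$ is called the source node of sub-state $j$. Communication: at each time $k$ there is a directed graph $\mathcal G[k]=(\mathcal V,\mathcal E[k])$; $(l,i)\in\mathcal E[k]$ means $l$ can send to $i$ at time $k$; $\mathcal N_i[k]=\{l\neq i:(l,i)\in\mathcal E[k]\}$. The union graph over $[k_1,k_2]$ has vertex set $\mathcal V$ and edge set $\bigcup_{\tau=k_1}^{k_2}\mathcal E[\tau]$. Algorithm 1 (run for every sub-state $j$ simultaneously). Each node $i$ keeps an estimate $\hat z^{(j)}_i[k]$ (arbitrary initial value) and a freshness index $\tau^{(j)}_i[k]\in\mathbb N\cup\{\omega\}$, where $\omega$ is a special symbol; initially $\tau^{(j)}_j[0]=0$ and $\tau^{(j)}_i[0]=\omega$ for $i\ne j$. Source node $j$: $\tau^{(j)}_j[k]=0$ for all $k$, and $\hat z^{(j)}_j[k+1]=(A_{jj}-L_jC_{jj})\hat z^{(j)}_j[k]+\sum_{q=1}^{j-1}(A_{jq}-L_jC_{jq})\hat z^{(q)}_j[k]+L_jy_j[k]$, where $L_j$ is an observer gain. Non-source node $i\neq j$ at time $k$: let $\mathcal M^{(j)}_i[k]=\{l\in\mathcal N_i[k]:\tau^{(j)}_l[k]\neq\omega\}$; if $\tau^{(j)}_i[k]=\omega$ let $\mathcal F^{(j)}_i[k]=\mathcal M^{(j)}_i[k]$, otherwise $\mathcal F^{(j)}_i[k]=\{l\in\mathcal M^{(j)}_i[k]:\tau^{(j)}_l[k]<\tau^{(j)}_i[k]\}$.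 If $\mathcal F^{(j)}_i[k]\ne\emptyset$, pick $u\in\arg\min_{l\in\mathcal F^{(j)}_i[k]}\tau^{(j)}_l[k]$ and set $\tau^{(j)}_i[k+1]=\tau^{(j)}_u[k]+1$ and $\hat z^{(j)}_i[k+1]=A_{jj}\hat z^{(j)}_u[k]+\sum_{q=1}^{j-1}A_{jq}\hat z^{(q)}_i[k]$ (''$i$ adopts the information of $u$ at time $k$''). If $\mathcal F^{(j)}_i[k]=\emptyset$, set $\tau^{(j)}_i[k+1]=\omega$ if $\tau^{(j)}_i[k]=\omega$ and $\tau^{(j)}_i[k+1]=\tau^{(j)}_i[k]+1$ otherwise, and $\hat z^{(j)}_i[k+1]=A_{jj}\hat z^{(j)}_i[k]+\sum_{q=1}^{j-1}A_{jq}\hat z^{(q)}_i[k]$ (''$i$ adopts its own information''). Conditions on the graph sequence: there is an increasing sequence $\mathbb I=\{t_0,t_1,\dots\}\subset\mathbb N$ with $t_0=0$ such that, with $f(t_q)=t_{q+1}-t_q$: (C1) $f(t_q)$ is non-decreasing in $q$; (C2) with $m(k)=\max\{t_q\in\mathbb I:t_q\le k\}$ and $g(k)=f(m(k))$, one has $\limsup_{k\to\infty}\frac{2(N-1)g(k)}{k}=\delta<1$; (C3) for each $q$, the union graph over $[t_q,t_{q+1}-1]$ is strongly connected. *)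

(* Defs.v *)
From HB Require Import structures.
From mathcomp Require Import all_boot all_order all_algebra.
Set Implicit Arguments. Unset Strict Implicit. Unset Printing Implicit Defensive.
Import Order.TTheory GRing.Theory Num.Theory.
Local Open Scope ring_scope.

Definition obsv_mx (R : nzRingType) (m p : nat) (A : 'M[R]_m) (C : 'M[R]_(p, m))
  : 'M[R]_((\sum_(k < m) p)%N, m) :=
  @mxcol R m (fun _ => p) m (fun k => C *m A ^+ k).

Definition observable (R : fieldType) (m p : nat) (A : 'M[R]_m) (C : 'M[R]_(p, m))
  : bool := \rank (obsv_mx A C) == m.

Definition vnorm (R : rcfType) (m : nat) (v : 'cV[R]_m) : R :=
  Num.sqrt (\sum_(a < m) v a 0 ^+ 2).

Definition union_rel (N : nat) (E : nat -> rel 'I_N) (a b : nat) : rel 'I_N :=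
  fun l i => has (fun k => E k l i) (index_iota a b).

Definition strongly_connected (N : nat) (e : rel 'I_N) : Prop :=
  forall l i : 'I_N, connect e l i.

Definition fwin (t : nat -> nat) (q : nat) : nat := (t q.+1 - t q)%N.

(* index q of m(k) = max {t_q in I : t_q <= k}  (for increasing t with t 0 = 0,
   every such q satisfies q <= k) *)
Definition last_idx (t : nat -> nat) (k : nat) : nat :=
  (\max_(q < k.+1 | t q <= k) q)%N.

Definition gwin (t : nat -> nat) (k : nat) : nat := fwin t (last_idx t k).

(* limsup_{k -> oo} u k < a  (literal unfolding of limsup = inf_K sup_{k>=K}) *)
Definition limsup_lt (R : realFieldType) (u : nat -> R) (a : R) : Prop :=
  exists2 b, b < a & exists K, forall k, (K <= k)%N -> u k <= b.

Section Alg.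
Variables (R : fieldType) (N : nat) (d r : 'I_N -> nat).
Variable Ab : forall j q : 'I_N, 'M[R]_(d j, d q).   (* blocks A_jq of T^-1 A T *)
Variable Cb : forall i q : 'I_N, 'M[R]_(r i, d q).   (* blocks C_iq of C_i T *)
Variable L : forall j : 'I_N, 'M[R]_(d j, r j).
Variable y : nat -> forall j : 'I_N, 'cV[R]_(r j).
Variable E : nat -> rel 'I_N.                        (* E k l i : (l,i) in E[k] *)
Variable zh : nat -> 'I_N -> forall j : 'I_N, 'cV[R]_(d j).
  (* zh k i j = \hat z^{(j)}_i[k] *)
Variable tau : nat -> 'I_N -> 'I_N -> option nat.
  (* tau k i j = tau^{(j)}_i[k];  None encodes omega *)

Definition Fset (k : nat) (i j : 'I_N) : {set 'I_N} :=
  [set l | [&& E k l i, l != i &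
     match tau k l j, tau k i j with
     | Some _, None => true
     | Some tl, Some ti => (tl < ti)%N
     | None, _ => false
     end]].

Definition source_update (k : nat) (j : 'I_N) : 'cV[R]_(d j) :=
  (Ab j j - L j *m Cb j j) *m zh k j j
  + \sum_(q < N | (q < j)%N) (Ab j q - L j *m Cb j q) *m zh k j q
  + L j *m y k j.

(* node i takes sub-state-j information from node u (u = i : its own) *)
Definition adopt_update (k : nat) (i u j : 'I_N) : 'cV[R]_(d j) :=
  Ab j j *m zh k u j + \sum_(q < N | (q < j)%N) Ab j q *m zh k i q.

(* (zh, tau) is a run of Algorithm 1 (any tie-breaking choice of u is allowed) *)
Definition alg_run : Prop :=
  (forall i j : 'I_N, i != j -> tau 0%N i j = None) /\
  forall (k : nat) (j : 'I_N),
    tau k j j = Some 0%N /\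
    zh k.+1 j j = source_update k j /\
    forall i : 'I_N, i != j ->
      if Fset k i j == set0 then
        tau k.+1 i j = omap S (tau k i j) /\ zh k.+1 i j = adopt_update k i i j
      else
        exists2 u, u \in Fset k i j &
          [/\ forall l, l \in Fset k i j -> (odflt 0 (tau k u j) <= odflt 0 (tau k l j))%N,
              tau k.+1 i j = omap S (tau k u j) &
              zh k.+1 i j = adopt_update k i u j].
End Alg.

(* Main.v *)
Require Import Defs.
From HB Require Import structures.
From mathcomp Require Import all_boot all_order all_algebra.
From mathcomp Require Import zify.
Set Implicit Arguments. Unset Strict Implicit. Unset Printing Implicit Defensive.
Import Order.TTheory GRing.Theory Num.Theory.
Local Open Scope ring_scope.

Section Deadbeat.
Variables (F : fieldType) (m p : nat) (A : 'M[F]_m) (H : 'M[F]_(p, m)).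

Fixpoint Sseq k : 'M[F]_m :=
  if k is k'.+1 then kermx (A *m cokermx (Sseq k' + H)%MS) else 0.

Fixpoint Rseq k : 'M[F]_m :=
  if k is k'.+1 then (Rseq k' + H *m A ^+ k')%MS else 0.

Lemma memS r (v : 'M[F]_(r, m)) k :
  (v <= Sseq k.+1)%MS = (v *m A <= Sseq k + H)%MS.
Proof. by rewrite /= sub_kermx submxE mulmxA. Qed.

Lemma RS k r (v : 'M[F]_(r, m)) : (v *m A ^+ k <= Rseq k)%MS -> (v <= Sseq k)%MS.
Proof.
elim: k r v => [|k IH] r v /=.
  by rewrite expr0 mulmx1 !submx0.
move=> /sub_addsmxP [w Hw].
rewrite memS.
have Hu : ((v *m A - w.2 *m H) *m A ^+ k <= Rseq k)%MS.
  have eA : A ^+ k.+1 = A *m A ^+ k by rewrite exprS.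
  rewrite mulmxBl -mulmxA -eA Hw.
  by rewrite mulmxA -mulmxA addrK submxMl.
have := IH _ _ Hu => Hs.
have -> : v *m A = (v *m A - w.2 *m H) + w.2 *m H by rewrite subrK.
by rewrite addmx_sub_adds ?submxMl.
Qed.

Lemma Rmono a b : (a <= b)%N -> (Rseq a <= Rseq b)%MS.
Proof.
elim: b => [|b IH]; first by rewrite leqn0 => /eqP->.
rewrite leq_eqVlt => /orP [/eqP->|]; first exact: submx_refl.
by rewrite ltnS => /IH Hab; apply: submx_trans Hab _; apply: addsmxSl.
Qed.

Lemma Smono1 k : (Sseq k <= Sseq k.+1)%MS.
Proof.
elim: k => [|k IH]; first exact: sub0mx.
rewrite memS; have := submx_refl (Sseq k.+1); rewrite memS => H1.
by apply: submx_trans H1 _; apply: addsmxS => //; apply: submx_refl.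
Qed.

Lemma Smono a b : (a <= b)%N -> (Sseq a <= Sseq b)%MS.
Proof.
elim: b => [|b IH]; first by rewrite leqn0 => /eqP->.
rewrite leq_eqVlt => /orP [/eqP->|]; first exact: submx_refl.
by rewrite ltnS => /IH Hab; apply: submx_trans Hab _; apply: Smono1.
Qed.

Lemma Sfull : observable A H -> forall r (v : 'M[F]_(r, m)), (v <= Sseq m)%MS.
Proof.
move=> hobs r v; apply: RS.
have sub : (obsv_mx A H <= Rseq m)%MS.
  apply/row_subP => i; rewrite /obsv_mx row_mxcol.
  apply: submx_trans (row_sub _ _) _.
  apply: submx_trans (Rmono (ltn_ord _)) => /=.
  exact: addsmxSr.
have full : row_full (Rseq m).
  rewrite /row_full eqn_leq rank_leq_col /=.
  by move: hobs (mxrankS sub); rewrite /observable => /eqP ->.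
exact: submx_full.
Qed.

Lemma construct k : exists L : 'M[F]_(m, p), forall j, (j < k)%N ->
  forall v : 'M[F]_m, (v <= Sseq j.+1)%MS -> (v *m (A - L *m H) <= Sseq j)%MS.
Proof.
elim: k => [|k [L HL]]; first by exists 0.
have [Pi HPi0 Hs] : exists2 Pi : 'M[F]_m,
    (forall w : 'M[F]_m, (w <= Sseq k)%MS -> w *m Pi = 0) &
    (forall w : 'M[F]_m, (w - w *m Pi <= Sseq k)%MS).
  have dx : ((Sseq k)^C :&: Sseq k = 0)%MS by rewrite capmxC capmx_compl.
  exists (proj_mx (Sseq k)^C%MS (Sseq k)).
    by move=> w Hw; apply: proj_mx_0.
  move=> w; apply: proj_mx_compl_sub.
  by apply: submx_full; rewrite addsmxC; apply: addsmx_compl_full.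
pose P1 := lsubmx (pinvmx (col_mx (Sseq k) H)).
pose P2 := rsubmx (pinvmx (col_mx (Sseq k) H)).
pose Y := (A - L *m H) *m P2.
exists (L + Pi *m Y) => j ltjk v Hv.
rewrite mulmxDl opprD addrA.
rewrite mulmxBr.
move: ltjk; rewrite ltnS leq_eqVlt => /orP [/eqP Ejk|ltjk]; last first.
  have Hvk : (v <= Sseq k)%MS by apply: submx_trans Hv (Smono ltjk).
  have -> : v *m (Pi *m Y *m H) = 0.
    by rewrite !mulmxA (HPi0 v Hvk) !mul0mx.
  by rewrite subr0; apply: HL.
subst j.
have Hsv := Hs v.
have Hu : (v *m Pi <= Sseq k.+1)%MS.
  have e : v *m Pi = v - (v - v *m Pi) by rewrite opprB addrC subrK.
  rewrite e; apply: addmx_sub => //; rewrite eqmx_opp; apply: submx_trans Hsv (Smono1 k).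
have HuF : ((v *m Pi) *m (A - L *m H) <= col_mx (Sseq k) H)%MS.
  rewrite -addsmxE mulmxBr mulmxA; apply: addmx_sub.
    by rewrite -memS.
  by rewrite eqmx_opp; apply: submx_trans (submxMl _ _) (addsmxSr _ _).
have Hdec := mulmxKpV HuF.
rewrite -[pinvmx _](hsubmxK) mul_mx_row mul_row_col in Hdec.
have -> : v *m (A - L *m H) - v *m (Pi *m Y *m H)
   = (v - v *m Pi) *m (A - L *m H) + ((v *m Pi) *m (A - L *m H) - (v *m Pi) *m Y *m H).
  by rewrite mulmxBl !mulmxA addrA subrK.
apply: addmx_sub.
  clear -HL Hsv; destruct k as [|k].
    by move: Hsv => /=; rewrite submx0 => /eqP->; rewrite mul0mx sub0mx.
  exact: submx_trans (HL k (ltnSn k) _ Hsv) (Smono1 k).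
rewrite -{1}Hdec /Y mulmxA addrK.
exact: submxMl.
Qed.

Lemma deadbeat : observable A H -> exists L : 'M[F]_(m, p), (A - L *m H) ^+ m = 0.
Proof.
move=> hobs; have [L HL] := construct m.
exists L.
have key : forall j, (j <= m)%N -> forall v : 'M[F]_m, (v <= Sseq j)%MS ->
    v *m (A - L *m H) ^+ j = 0.
  elim => [|j IH] ljm v Hv.
    by move: Hv; rewrite /= submx0 => /eqP->; rewrite mul0mx.
  have eA : (A - L *m H) ^+ j.+1 = (A - L *m H) *m (A - L *m H) ^+ j by rewrite exprS.
  rewrite eA mulmxA; apply: IH; first exact: ltnW.
  exact: HL.
by rewrite -[_ ^+ m]mul1mx; apply: key => //; apply: Sfull.
Qed.
End Deadbeat.

Lemma crossing (N : nat) (e : rel 'I_N) (S : {set 'I_N}) x y :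
  connect e x y -> x \in S -> y \notin S ->
  exists a b, [/\ e a b, a \in S & b \notin S].
Proof.
move/connectP => [p pth ->] {y}.
elim: p x pth => [|z p IH] x /=; first by move=> _ ->.
move=> /andP [exz pth] xS.
case zS: (z \in S); first exact: IH.
by move=> _; exists x, z; rewrite zS.
Qed.

Section Fresh.
Variables (R : fieldType) (N : nat) (d r : 'I_N -> nat).
Variable Ab : forall j q : 'I_N, 'M[R]_(d j, d q).
Variable Cb : forall i q : 'I_N, 'M[R]_(r i, d q).
Variable L : forall j : 'I_N, 'M[R]_(d j, r j).
Variable y : nat -> forall j : 'I_N, 'cV[R]_(r j).
Variable E : nat -> rel 'I_N.
Variable zh : nat -> 'I_N -> forall j : 'I_N, 'cV[R]_(d j).
Variable tau : nat -> 'I_N -> 'I_N -> option nat.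
Hypothesis run : alg_run Ab Cb L y E zh tau.
Variable j : 'I_N.

Lemma tau_self k i s : tau k i j = Some s ->
  exists2 s', tau k.+1 i j = Some s' & (s' <= s.+1)%N.
Proof.
case: run => _ Hk Hs.
have [Hjj [_ Hoth]] := Hk k j.
case: (eqVneq i j) => [->|nij].
  by have [-> _] := Hk k.+1 j; exists 0%N.
have := Hoth i nij.
case: ifP => _.
  by move=> [-> _]; rewrite Hs; exists s.+1.
move=> [u uF [_ -> _]].
move: uF; rewrite inE Hs.
case: (tau k u j) => [tu|] /and3P [_ _ //] ltu.
by exists tu.+1 => //; apply: ltnW.
Qed.

Lemma tau_edge k l i s : E k l i -> l != i -> tau k l j = Some s ->
  exists2 s', tau k.+1 i j = Some s' & (s' <= s.+1)%N.
Proof.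
move=> Eli nli Hs.
case: run => _ Hk.
have [Hjj [_ Hoth]] := Hk k j.
case: (eqVneq i j) => [->|nij].
  by have [-> _] := Hk k.+1 j; exists 0%N.
have Hl : l \in Fset E tau k i j = if tau k i j is Some ti then (s < ti)%N else true.
  by rewrite inE Eli nli Hs /=; case: (tau k i j).
have := Hoth i nij.
case: ifP => [/eqP F0|Fn].
  move=> [-> _]; move: Hl; rewrite F0 inE.
  case: (tau k i j) => [ti|] //= /esym/negbT; rewrite -leqNgt => le.
  by exists ti.+1.
move=> [u uF [Hmin -> _]].
have Hu : u \in Fset E tau k i j by [].
move: uF; rewrite inE.
case Htu: (tau k u j) => [tu|] /and3P [_ _ //] Hc.
exists tu.+1 => //; rewrite ltnS.
case lF: (l \in Fset E tau k i j).
  by have := Hmin l lF; rewrite Htu Hs.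
move: Hl Hc; rewrite lF; case: (tau k i j) => [ti|] //= /esym/negbT.
by rewrite -leqNgt => le lt; apply: ltnW; apply: leq_trans lt le.
Qed.

Definition inf K0 k i : bool :=
  if tau k i j is Some s then (K0 <= k - s)%N else false.

Lemma inf_self K0 k i : inf K0 k i -> inf K0 k.+1 i.
Proof.
rewrite /inf; case Hs: (tau k i j) => [s|] //.
have [s' -> le] := tau_self Hs => h.
by apply: leq_trans h _; rewrite -subSS; apply: leq_sub2l.
Qed.

Lemma inf_edge K0 k l i : E k l i -> l != i -> inf K0 k l -> inf K0 k.+1 i.
Proof.
move=> Eli nli; rewrite /inf; case Hs: (tau k l j) => [s|] //.
have [s' -> le] := tau_edge Eli nli Hs => h.
by apply: leq_trans h _; rewrite -subSS; apply: leq_sub2l.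
Qed.

Lemma inf_src K0 k : (K0 <= k)%N -> inf K0 k j.
Proof. by case: run => _ Hk; rewrite /inf (Hk k j).1 subn0. Qed.

Lemma inf_mono K0 a b i : (a <= b)%N -> inf K0 a i -> inf K0 b i.
Proof.
elim: b => [|b IH]; first by rewrite leqn0 => /eqP->.
rewrite leq_eqVlt => /orP [/eqP->//|]; rewrite ltnS => /IH H /H.
exact: inf_self.
Qed.

Definition Iset K0 k : {set 'I_N} := [set i | inf K0 k i].

Lemma Iset_mono K0 a b : (a <= b)%N -> Iset K0 a \subset Iset K0 b.
Proof. by move=> ab; apply/subsetP => i; rewrite !inE; apply: inf_mono. Qed.

Variable t : nat -> nat.
Hypothesis htinc : forall q, (t q < t q.+1)%N.
Hypothesis hC3 : forall q, strongly_connected (union_rel E (t q) (t q.+1)).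

Lemma grow K0 q : Iset K0 (t q) != set0 -> Iset K0 (t q) != setT ->
  (#|Iset K0 (t q)| < #|Iset K0 (t q.+1)|)%N.
Proof.
move=> /set0Pn [x xI] hne.
have [z zI] : exists z, z \notin Iset K0 (t q).
  case: (boolP [exists z, z \notin Iset K0 (t q)]) => [/existsP HH|/existsPn H]; first exact: HH.
  move: hne; suff -> : Iset K0 (t q) = setT by rewrite eqxx.
  by apply/setP => w; rewrite in_setT; have := H w; rewrite negbK.
have [a [b [eab aI bI]]] := crossing (hC3 q x z) xI zI.
move: eab => /hasP [k]; rewrite mem_index_iota => /andP [k1 k2] Ek.
apply: proper_card; rewrite properE Iset_mono /=; last exact: ltnW (htinc q).
apply/subsetPn; exists b => //.
have nab : a != b by apply: contraNneq bI => <-.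
move: aI; rewrite !inE => aI.
apply: inf_mono k2 _; apply: inf_edge Ek nab _.
exact: inf_mono aI.
Qed.

Lemma t_mono a b : (a <= b)%N -> (t a <= t b)%N.
Proof.
elim: b => [|b IH]; first by rewrite leqn0 => /eqP->.
rewrite leq_eqVlt => /orP [/eqP->//|]; rewrite ltnS => /IH H.
by apply: leq_trans H (ltnW (htinc b)).
Qed.

Lemma cover K0 q0 : (K0 <= t q0)%N -> forall n,
  (n.+1 <= #|Iset K0 (t (q0 + n))|)%N || (Iset K0 (t (q0 + n)) == setT).
Proof.
move=> hK; elim => [|n IH].
  rewrite addn0 card_gt0; apply/orP; left; apply/set0Pn; exists j.
  by rewrite inE; apply: inf_src.
case/orP: IH => [Hc|/eqP HT]; last first.
  apply/orP; right; rewrite eqEsubset subsetT /= -HT addnS.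
  by apply: Iset_mono; apply: ltnW.
case: (eqVneq (Iset K0 (t (q0 + n.+1))) setT) => [->|hne]; first by rewrite orbT.
apply/orP; left.
case: (eqVneq (Iset K0 (t (q0 + n))) setT) => [HT|hne'].
  have := Iset_mono K0 (ltnW (htinc (q0 + n))); rewrite HT -addnS.
  by rewrite subTset (negbTE hne).
have ne0 : Iset K0 (t (q0 + n)) != set0 by rewrite -card_gt0; apply: leq_trans Hc.
rewrite addnS; apply: leq_trans (grow ne0 hne'); by rewrite ltnS.
Qed.

Lemma all_inf K0 : exists K, forall k i, (K <= k)%N -> inf K0 k i.
Proof.
have tq : forall q, (q <= t q)%N.
  elim => [|q IH] //; apply: leq_ltn_trans IH (htinc q).
exists (t (K0 + N)) => k i hk.
have := cover (tq K0) N.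
case/orP => [Hc|/eqP HT].
  by have := leq_trans Hc (max_card _); rewrite card_ord ltnn.
have : i \in Iset K0 (t (K0 + N)) by rewrite HT inE.
by rewrite inE => /(inf_mono hk).
Qed.
End Fresh.

Unset Implicit Arguments. Set Strict Implicit.

Lemma sum_tri (V : zmodType) (N : nat) (q : 'I_N) (F : 'I_N -> V) :
  (forall p : 'I_N, (q < p)%N -> F p = 0) ->
  \sum_(p < N) F p = F q + \sum_(p < N | (p < q)%N) F p.
Proof.
move=> H0; rewrite (bigD1 q) //=; congr (_ + _).
rewrite (bigID (fun p : 'I_N => (p < q)%N)) /=.
rewrite [X in _ + X]big1 ?addr0.
  by apply: eq_bigl => p; rewrite andb_idl // => lt; rewrite neq_ltn lt.
move=> p /andP [npq]; rewrite -leqNgt leq_eqVlt => /orP [/eqP E|lt].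
  have epq : p = q by apply: val_inj; rewrite /= E.
  by rewrite epq eqxx in npq.
exact: H0.
Qed.

Lemma zmod_id (V : zmodType) (w sa sl lc az : V) :
  w + (sa - sl) + (lc + sl) - (az + sa) = w - (az - lc).
Proof.
by rewrite addrACA subrK opprD addrACA subrr addr0 opprB addrA.
Qed.

Theorem theorem1 (R : archiRcfType) (N : nat) (d r : 'I_N -> nat)
  (A : 'M[R]_(\sum_(j < N) d j))
  (Cs : forall i : 'I_N, 'M[R]_(r i, \sum_(j < N) d j))
  (T : 'M[R]_(\sum_(j < N) d j))
  (hobs : observable A (mxcol Cs))
  (hT : T \in unitmx)
  (htri : forall j q : 'I_N, (j < q)%N ->
            submxblock (invmx T *m A *m T) j q = 0)
  (hCT : forall i q : 'I_N, (i < q)%N -> submxrow (Cs i *m T) q = 0)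
  (hobsj : forall j : 'I_N,
     observable (submxblock (invmx T *m A *m T) j j) (submxrow (Cs j *m T) j))
  (E : nat -> rel 'I_N) (t : nat -> nat)
  (ht0 : t 0%N = 0%N) (htinc : forall q, (t q < t q.+1)%N)
  (hC1 : forall q, (fwin t q <= fwin t q.+1)%N)
  (hC2 : limsup_lt (fun k => (2 * N.-1 * gwin t k)%:R / k%:R : R) 1)
  (hC3 : forall q, strongly_connected (union_rel E (t q) (t q.+1)))
  (rho : R) (hrho : 0 < rho < 1) :
  exists L : forall j : 'I_N, 'M[R]_(d j, r j),
    forall (x : nat -> 'cV[R]_(\sum_(j < N) d j))
           (zh : nat -> 'I_N -> forall j : 'I_N, 'cV[R]_(d j))
           (tau : nat -> 'I_N -> 'I_N -> option nat),
      (forall k, x k.+1 = A *m x k) ->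
      alg_run (fun j q => submxblock (invmx T *m A *m T) j q)
              (fun i q => submxrow (Cs i *m T) q)
              L (fun k j => Cs j *m x k) E zh tau ->
      exists c : R, exists K : nat, 0 <= c /\
        forall (k : nat) (i : 'I_N), (K <= k)%N ->
          vnorm (T *m mxcol (zh k i) - x k) <= c * rho ^+ k.
Proof.
have hL : forall j : 'I_N, exists L0 : 'M[R]_(d j, r j),
    (submxblock (invmx T *m A *m T) j j - L0 *m submxrow (Cs j *m T) j) ^+ d j == 0.
  by move=> j; have [L0 HL0] := deadbeat (hobsj j); exists L0; apply/eqP.
exists (fun j => xchoose (hL j)).
move=> x zh tau hx run.
have HLn : forall j, (submxblock (invmx T *m A *m T) j j
    - xchoose (hL j) *m submxrow (Cs j *m T) j) ^+ d j = 0.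
  by move=> j; apply/eqP; exact: (xchooseP (hL j)).
set L := fun j => xchoose (hL j) in run HLn *.
set Abar := invmx T *m A *m T in run HLn htri *.
pose zb k q := submxcol (invmx T *m x k) q.
have hZ : forall k (q : 'I_N), zb k.+1 q =
    submxblock Abar q q *m zb k q + \sum_(p < N | (p < q)%N) submxblock Abar q p *m zb k p.
  move=> k q.
  have gen : forall v : 'cV[R]_(\sum_(j < N) d j), submxcol (Abar *m v) q =
      \sum_(p < N) submxblock Abar q p *m submxcol v p.
    move=> v; rewrite -{1}[Abar]submxblockK -[v]submxcolK mul_mxblock_mxrow mxcolK.
    by apply: eq_bigr => p _; rewrite mxcolK.
  have -> : zb k.+1 q = submxcol (Abar *m (invmx T *m x k)) q.
    by rewrite /zb hx /Abar -!mulmxA (mulKVmx hT).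
  rewrite gen; apply: sum_tri => p qp; by rewrite htri // mul0mx.
have hY : forall k (q : 'I_N), Cs q *m x k =
    submxrow (Cs q *m T) q *m zb k q
    + \sum_(p < N | (p < q)%N) submxrow (Cs q *m T) p *m zb k p.
  move=> k q.
  have -> : Cs q *m x k = (Cs q *m T) *m (invmx T *m x k).
    by rewrite -mulmxA (mulKVmx hT).
  have gen : forall v : 'cV[R]_(\sum_(j < N) d j), (Cs q *m T) *m v =
      \sum_(p < N) submxrow (Cs q *m T) p *m submxcol v p.
    by move=> v; rewrite -{1}[Cs q *m T]submxrowK -[v]submxcolK mul_mxrow_mxcol;
      apply: eq_bigr => p _; rewrite !mxcolK.
  rewrite gen; apply: sum_tri => p qp; by rewrite hCT // mul0mx.
have [run0 runk] := run.
have Hstep : forall k (q : 'I_N), (forall p : 'I_N, (p < q)%N -> zh k q p = zb k p) ->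
    zh k.+1 q q - zb k.+1 q = (submxblock Abar q q - L q *m submxrow (Cs q *m T) q)
       *m (zh k q q - zb k q).
  move=> k q Hp; have [_ [-> _]] := runk k q.
  rewrite /source_update /= hZ hY.
  have e1 : \sum_(p < N | (p < q)%N)
      (submxblock Abar q p - L q *m submxrow (Cs q *m T) p) *m zh k q p
    = \sum_(p < N | (p < q)%N) submxblock Abar q p *m zb k p
      - \sum_(p < N | (p < q)%N) (L q *m submxrow (Cs q *m T) p) *m zb k p.
    by rewrite -sumrB; apply: eq_bigr => p pq; rewrite Hp // mulmxBl.
  have e2 : L q *m (submxrow (Cs q *m T) q *m zb k q
      + \sum_(p < N | (p < q)%N) submxrow (Cs q *m T) p *m zb k p)
    = L q *m submxrow (Cs q *m T) q *m zb k q
      + \sum_(p < N | (p < q)%N) (L q *m submxrow (Cs q *m T) p) *m zb k p.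
    rewrite mulmxDr mulmx_sumr mulmxA; congr (_ + _).
    by apply: eq_bigr => p _; rewrite mulmxA.
  rewrite e1 e2 [in RHS]mulmxBr [in RHS](mulmxBl (submxblock Abar q q) _ (zb k q)).
  exact: zmod_id.
have Hadopt : forall k i u (q : 'I_N),
    (forall p : 'I_N, (p < q)%N -> zh k i p = zb k p) -> zh k u q = zb k q ->
    adopt_update (fun j q => submxblock Abar j q) zh k i u q = zb k.+1 q.
  move=> k i u q Hp Hu; rewrite /adopt_update /= Hu hZ; congr (_ + _).
  by apply: eq_bigr => p pq; rewrite Hp.
have main : forall n, exists K, forall q : 'I_N, (q < n)%N ->
    forall k i, (K <= k)%N -> zh k i q = zb k q.
  elim => [|n [K' IH]]; first by exists 0%N.
  case: (ltnP n N) => [ltnN|geN]; last first.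
    by exists K' => q qn; apply: IH; apply: leq_trans (ltn_ord q) geN.
  pose q0 := Ordinal ltnN.
  set M := submxblock Abar q0 q0 - L q0 *m submxrow (Cs q0 *m T) q0.
  have Hpow : forall n0, zh (K' + n0)%N q0 q0 - zb (K' + n0)%N q0
      = M ^+ n0 *m (zh K' q0 q0 - zb K' q0).
    elim => [|n0 IHn]; first by rewrite addn0 expr0 mul1mx.
    rewrite addnS Hstep; last first.
      by move=> p pq; apply: IH; [exact: pq | apply: leq_addr].
    rewrite IHn mulmxA.
    have eM : M ^+ n0.+1 = M *m M ^+ n0 by rewrite exprS.
    by rewrite eM.
  have Hsrc : forall k, (K' + d q0 <= k)%N -> zh k q0 q0 = zb k q0.
    move=> k hk; apply/eqP; rewrite -subr_eq0.
    have hk' : (K' <= k)%N by lia.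
    rewrite -(subnKC hk') Hpow.
    have -> : (k - K')%N = ((k - K' - d q0) + d q0)%N by lia.
    by rewrite exprD HLn mulr0 mul0mx.
  set K0 := (K' + d q0)%N.
  have Hinv : forall k i, inf tau q0 K0 k i -> zh k i q0 = zb k q0.
    elim => [|k IHk] i.
      case: (eqVneq i q0) => [->|niq].
        by rewrite /inf (runk 0%N q0).1 subn0 => h; exact: Hsrc.
      by rewrite /inf run0.
    case: (eqVneq i q0) => [->|niq].
      by rewrite /inf (runk k.+1 q0).1 subn0 => h; exact: Hsrc.
    have := (runk k q0).2.2 i niq.
    case: ifP => _.
      move=> [Ht Hz]; rewrite /inf Ht Hz.
      case Hs: (tau k i q0) => [s|] //=; rewrite subSS => hs.
      have hk : (K' <= k)%N by move: hs; rewrite /K0; lia.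
      apply: Hadopt.
        by move=> p pq; apply: IH; [exact: pq | exact: hk].
      by apply: IHk; rewrite /inf Hs.
    move=> [u uF [_ Ht Hz]]; rewrite /inf Ht Hz.
    case Hs: (tau k u q0) => [s|] //=; rewrite subSS => hs.
    have hk : (K' <= k)%N by move: hs; rewrite /K0; lia.
    apply: Hadopt.
      by move=> p pq; apply: IH; [exact: pq | exact: hk].
    by apply: IHk; rewrite /inf Hs.
  have [K1 HK1] := all_inf run q0 htinc hC3 K0.
  exists (maxn K' K1) => q qn k i hk.
  move: qn; rewrite ltnS leq_eqVlt => /orP [/eqP eq|lt].
    have -> : q = q0 by apply: val_inj.
    apply: Hinv; apply: HK1; apply: leq_trans hk; exact: leq_maxr.
  by apply: IH => //; apply: leq_trans hk; exact: leq_maxl.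
have [K HK] := main N.
exists 0, K; split => // k i hk.
have -> : mxcol (zh k i) = invmx T *m x k.
  rewrite -[RHS]submxcolK; apply: eq_mxcol => q; exact: HK.
rewrite (mulKVmx hT) subrr mul0r.
rewrite /vnorm big1 ?sqrtr0 // => a _.
by rewrite mxE expr2 mulr0.
Qed.
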